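(* Let $q\in\mathbb{C}$ with $q\neq 0,1$ and $q$ not a root of unity. Let $(L,\sigma,\theta^{*})$ be a (commutative) qsi field extension of $\mathbb{C}$. If a matrix $Y=(y_{ij})\in \mathrm{M}_2(L)$ satisfies \[ \sigma Y=\begin{bmatrix} q&0\\0&1\end{bmatrix}Y \quad\text{and}\quad \theta^{(1)}Y=\begin{bmatrix}0&1\\0&0\end{bmatrix}Y \] (with $\sigma,\theta^{(1)}$ applied entrywise), then $\det Y=0$.
   Context: Fix $q\in\mathbb{C}$, $q\neq0,1$, not a root of unity; put $[m]_q=1+q+\dots+q^{m-1}$ and $[m]_q!=[1]_q[2]_q\cdots[m]_q$. A qsi (q-SI $\sigma$-differential) algebra over $\mathbb{C}$ is a triple $(A,\sigma,\theta^{*})$ where $A$ is a $\mathbb{C}$-algebra, $\sigma:A\to A$ is a $\mathbb{C}$-algebra automorphism, $\theta^{*}=\{\theta^{(m)}\}_{m\in\mathbb{N}}$ is a family of $\mathbb{C}$-linear maps $A\to A$ with $\theta^{(0)}=\mathrm{Id}_A$, $\theta^{(m)}=\frac{1}{[m]_q!}(\theta^{(1)})^m$, and $\theta^{(1)}$ satisfies the twisted Leibniz rule $\theta^{(1)}(ab)=\theta^{(1)}(a)\,b+\sigma(a)\,\theta^{(1)}(b)$ and $\theta^{(1)}\circ\sigma=q\,\sigma\circ\theta^{(1)}$, with $\sigma$ and $\theta^{(1)}$ acting on $\mathbb{C}$ as the identity and zero respectively. A qsi field is a qsi algebra whose underlying ring is a commutative field. The model example is $\mathbb{C}(t)$ with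 $\sigma(f)(t)=f(qt)$ and $\theta^{(1)}f=\frac{f(qt)-f(t)}{(q-1)t}$. *)

(* Defs.v *)
From HB Require Import structures.
From mathcomp Require Import all_boot all_order all_algebra.
Set Implicit Arguments. Unset Strict Implicit. Unset Printing Implicit Defensive.
Import Order.TTheory GRing.Theory Num.Theory.
Local Open Scope ring_scope.

Definition qint (C : nzRingType) (q : C) (m : nat) : C := \sum_(i < m) q ^+ i.
Definition qfact (C : nzRingType) (q : C) (m : nat) : C :=
  \prod_(1 <= k < m.+1) qint q k.

(* (L, sigma, thetas) is a qsi field over C, where L is a (commutative) field
   made into a C-algebra via the ring morphism iota : C -> L.
   thetas m is theta^(m); thetas 1 is theta^(1). *)
Definition qsi_field (C : fieldType) (q : C) (L : fieldType)
    (iota : {rmorphism C -> L}) (sigma : L -> L) (thetas : nat -> L -> L) : Prop :=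
  [/\ (forall a b, sigma (a + b) = sigma a + sigma b),
      (forall a b, sigma (a * b) = sigma a * sigma b),
      sigma 1 = 1,
      bijective sigma &
      (forall c, sigma (iota c) = iota c)] /\
  (forall m a b, thetas m (a + b) = thetas m a + thetas m b) /\
  (forall m c a, thetas m (iota c * a) = iota c * thetas m a) /\
  (forall a, thetas 0%N a = a) /\
  (forall m a, thetas m a = (iota (qfact q m))^-1 * iter m (thetas 1%N) a) /\
  (forall a b, thetas 1%N (a * b) = thetas 1%N a * b + sigma a * thetas 1%N b) /\
  (forall a, thetas 1%N (sigma a) = iota q * sigma (thetas 1%N a)) /\
  (forall c, thetas 1%N (iota c) = 0).

(* Main.v *)
Require Import Defs.
From HB Require Import structures.
From mathcomp Require Import all_boot all_order all_algebra.
From mathcomp Require Import ring.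
Import Order.TTheory GRing.Theory Num.Theory.
Local Open Scope ring_scope.

Theorem lemma1 (C : numClosedFieldType) (q : C)
  (hq0 : q != 0) (hq1 : q != 1)
  (hqroot : forall n : nat, (0 < n)%N -> ~~ n.-unity_root q)
  (L : fieldType) (iota : {rmorphism C -> L})
  (sigma : L -> L) (thetas : nat -> L -> L)
  (hL : qsi_field q iota sigma thetas)
  (Y : 'M[L]_2)
  (hsigma : map_mx sigma Y =
            (\matrix_(i < 2, j < 2)
               (if (i == 0) && (j == 0) then iota q
                else if (i == 1) && (j == 1) then 1 else 0)) *m Y)
  (htheta : map_mx (thetas 1%N) Y =
            (\matrix_(i < 2, j < 2)
               (if (i == 0) && (j == 1) then 1 else 0 : L)) *m Y) :
  \det Y = 0.
Proof.
case: hL => _ [_ [_ [_ [_ [hleib _]]]]].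
have sa := congr1 (fun M : 'M[L]_2 => M 0 0) hsigma.
have sb := congr1 (fun M : 'M[L]_2 => M 0 1) hsigma.
have ta := congr1 (fun M : 'M[L]_2 => M 0 0) htheta.
have tb := congr1 (fun M : 'M[L]_2 => M 0 1) htheta.
move: sa sb ta tb; rewrite !mxE !big_ord_recr !big_ord0 /= !mxE /= => sa sb ta tb.
rewrite !add0r in sa sb ta tb.
rewrite !mul0r !addr0 in sa sb; rewrite !mul0r !mul1r !add0r in ta tb.
have e : Y 0 0 * Y 0 1 = Y 0 1 * Y 0 0 by rewrite mulrC.
have := congr1 (thetas 1%N) e; rewrite !hleib sa sb ta tb => h.
have hq : iota q - 1 != 0 by rewrite subr_eq0 fmorph_eq1.
rewrite (expand_det_row _ 0) !big_ord_recr big_ord0 /= /cofactor !det_mx11 !mxE /=.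
have w0 : (widen_ord (leqnSn 1) ord_max : 'I_2) = 0 by apply/val_inj.
have m1 : (ord_max : 'I_2) = 1 by apply/val_inj.
have l01 : lift (0 : 'I_2) (0 : 'I_1) = 1 by apply/val_inj.
have l10 : lift (1 : 'I_2) (0 : 'I_1) = 0 by apply/val_inj.
rewrite w0 m1 l01 l10 in sa sb ta tb h *.
rewrite add0r expr0 expr1 !mul1r.
set X := _ + _.
have hX : (iota q - 1) * X = (Y 1 0 * Y 0 1 + iota q * Y 0 0 * Y 1 1) -
    (Y 1 1 * Y 0 0 + iota q * Y 0 1 * Y 1 0) by rewrite /X; ring.
rewrite h subrr in hX.
by move/eqP: hX; rewrite mulf_eq0 (negbTE hq) /= => /eqP.
Qed.
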